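(* Let $A$ be the six-element poset $\{a_1,a_2,b_1,b_2,c_1,c_2\}$ whose order is generated by $a_i<b_j$ and $b_j<c_k$ for all $i,j,k\in\{1,2\}$ (so $a_1,a_2$ are incomparable, $b_1,b_2$ are incomparable, $c_1,c_2$ are incomparable, and $a_i<c_k$). Then $A$ is not cofibrant in the model structure on $\mathbf{Pos}$.
   Context: The model structure on $\mathbf{Pos}$: a map $f$ of posets is a weak equivalence/fibration iff it is so as a functor in the Thomason model structure on $\mathbf{Cat}$ (where $F$ is a weak equivalence/fibration iff $\mathrm{Ex}^2NF$ is one in the Kan–Quillen model structure on $\mathbf{sSet}$, $N$ the nerve, $\mathrm{Ex}$ Kan's functor); cofibrations are the maps with the left lifting property against acyclic fibrations. The classifying space of $A$ is homeomorphic to $S^2$. *)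

(* Defs.v *)
From Stdlib Require Import FunctionalExtensionality ProofIrrelevance.
From mathcomp Require Import all_boot.
Set Implicit Arguments. Unset Strict Implicit. Unset Printing Implicit Defensive.

Lemma sig_eq (A : Type) (P : A -> Prop) (x y : sig P) : sval x = sval y -> x = y.
Proof. case: x => x hx; case: y => y hy /= E; subst y; by rewrite (proof_irrelevance _ hx hy). Qed.

Lemma sig_fun_eq (A B : Type) (P : (A -> B) -> Prop) (x y : sig P) :
  (forall a, sval x a = sval y a) -> x = y.
Proof. by move=> H; apply: sig_eq; apply: functional_extensionality. Qed.

Record Poset := {
  pcar :> Type;
  ple : pcar -> pcar -> Prop;
  ple_refl : forall x, ple x x;
  ple_antisym : forall x y, ple x y -> ple y x -> x = y;
  ple_trans : forall x y z, ple x y -> ple y z -> ple x z }.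

Record Mono (P Q : Poset) := {
  mfun :> P -> Q;
  mfun_mono : forall x y, ple x y -> ple (mfun x) (mfun y) }.

(* The simplex category Delta: [n] = 'I_n.+1, morphisms monotone maps. *)
Definition dmono (m n : nat) :=
  {f : 'I_m.+1 -> 'I_n.+1 | forall i j : 'I_m.+1, i <= j -> f i <= f j}.

Record sSet := {
  sob :> nat -> Type;
  smap : forall m n, dmono m n -> sob n -> sob m;
  smap_id : forall n (f : dmono n n) (x : sob n),
      (forall i, sval f i = i) -> smap f x = x;
  smap_comp : forall k m n (f : dmono k m) (g : dmono m n) (h : dmono k n) (x : sob n),
      (forall i, sval h i = sval g (sval f i)) -> smap h x = smap f (smap g x) }.

Record sMap (X Y : sSet) := {
  sapp :> forall n, X n -> Y n;
  snat : forall m n (f : dmono m n) (x : X n), sapp (smap f x) = smap f (sapp x) }.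

Lemma sMap_ext X Y (u v : sMap X Y) :
  (forall n x, u n x = v n x) -> u = v.
Proof.
case: u => u hu; case: v => v hv /= H.
have E : u = v.
  apply: functional_extensionality_dep => n; apply: functional_extensionality => x; exact: H.
subst v; by rewrite (proof_irrelevance _ hu hv).
Qed.

Definition sMap_comp X Y Z (q : sMap Y Z) (p : sMap X Y) : sMap X Z.
Proof.
refine (@Build_sMap X Z (fun n x => q n (p n x)) _).
by move=> m n f x; rewrite snat snat.
Defined.

Definition nerve_ob (P : Poset) (n : nat) :=
  {s : 'I_n.+1 -> P | forall i j : 'I_n.+1, i <= j -> ple (s i) (s j)}.

Definition nerve_map (P : Poset) m n (f : dmono m n) (s : nerve_ob P n) : nerve_ob P m.
Proof.
exists (fun i => sval s (sval f i)).
by move=> i j hij; apply: (svalP s); apply: (svalP f).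
Defined.

Definition Nerve (P : Poset) : sSet.
Proof.
refine (@Build_sSet (nerve_ob P) (@nerve_map P) _ _).
- by move=> n f s Hf; apply: sig_fun_eq => i /=; rewrite Hf.
- by move=> k m n f g h s Hh; apply: sig_fun_eq => i /=; rewrite Hh.
Defined.

Definition nervemap_ob (P Q : Poset) (F : Mono P Q) n (s : Nerve P n) : Nerve Q n.
Proof.
exists (fun i => F (sval s i)).
by move=> i j hij; apply: mfun_mono; apply: (svalP s).
Defined.

Definition NerveMap (P Q : Poset) (F : Mono P Q) : sMap (Nerve P) (Nerve Q).
Proof.
refine (@Build_sMap (Nerve P) (Nerve Q) (@nervemap_ob P Q F) _).
by move=> m n f s; apply: sig_fun_eq.
Defined.

(* Kan's Ex functor: (Ex X)_n = Hom_sSet(sd Delta^n, X), where         *)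
(* sd Delta^n = N(poset of nonempty subsets of [n]).                    *)
Definition subs (n : nat) := {A : {set 'I_n.+1} | A != set0}.

Definition SubPoset (n : nat) : Poset.
Proof.
refine (@Build_Poset (subs n) (fun A B => sval A \subset sval B) _ _ _).
- by move=> A; exact: subxx.
- move=> A B h1 h2; apply: sig_eq; apply/eqP; by rewrite eqEsubset h1 h2.
- by move=> A B C; exact: subset_trans.
Defined.

Definition sub_push m n (f : dmono m n) (A : SubPoset m) : SubPoset n.
Proof.
exists (sval f @: sval A).
case: A => A /=; case/set0Pn => x hx; apply/set0Pn; exists (sval f x); exact: imset_f.
Defined.

Definition SubPush m n (f : dmono m n) : Mono (SubPoset m) (SubPoset n).
Proof.
refine (@Build_Mono _ _ (sub_push f) _).
by move=> A B hAB; rewrite /sub_push /=; apply: imsetS.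
Defined.

Definition Ex_ob (X : sSet) (n : nat) := sMap (Nerve (SubPoset n)) X.

Definition Ex_map (X : sSet) m n (f : dmono m n) (u : Ex_ob X n) : Ex_ob X m :=
  sMap_comp u (NerveMap (SubPush f)).

Definition Ex (X : sSet) : sSet.
Proof.
refine (@Build_sSet (Ex_ob X) (@Ex_map X) _ _).
- move=> n f u Hf; apply: sMap_ext => k s /=.
  congr (u k _); apply: sig_fun_eq => i /=; apply: sig_eq => /=.
  by rewrite (eq_imset _ Hf) imset_id.
- move=> k m n f g h u Hh; apply: sMap_ext => l s /=.
  congr (u l _); apply: sig_fun_eq => i /=; apply: sig_eq => /=.
  by rewrite -imset_comp; apply: eq_imset => i0; rewrite /= Hh.
Defined.

Definition ExMap (X Y : sSet) (p : sMap X Y) : sMap (Ex X) (Ex Y).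
Proof.
refine (@Build_sMap (Ex X) (Ex Y) (fun n u => sMap_comp p u) _).
by move=> m n f u; apply: sMap_ext.
Defined.

Definition OrdPoset (n : nat) : Poset.
Proof.
refine (@Build_Poset 'I_n.+1 (fun i j => i <= j) _ _ _).
- by move=> i; exact: leqnn.
- by move=> i j h1 h2; apply: val_inj; apply/eqP; rewrite eqn_leq h1 h2.
- by move=> i j k; exact: leq_trans.
Defined.

Definition Delta (n : nat) : sSet := Nerve (OrdPoset n).

Definition bd_ob (n m : nat) :=
  {s : Delta n m | exists j : 'I_n.+1, forall i, sval s i != j}.

Definition bd_map n m k (f : dmono m k) (s : bd_ob n k) : bd_ob n m.
Proof.
exists (smap f (sval s)).
case: s => s [j hj]; exists j => i; exact: hj.
Defined.

Definition Boundary (n : nat) : sSet.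
Proof.
refine (@Build_sSet (bd_ob n) (@bd_map n) _ _).
- by move=> k f s Hf; apply: sig_eq; exact: (@smap_id (Delta n) _ f _ Hf).
- by move=> k m l f g h s Hh; apply: sig_eq; exact: (@smap_comp (Delta n) _ _ _ f g h _ Hh).
Defined.

Definition bd_incl (n : nat) : sMap (Boundary n) (Delta n).
Proof.
refine (@Build_sMap (Boundary n) (Delta n) (fun m s => sval s) _).
by [].
Defined.

Definition sset_acyclic_fibration (X Y : sSet) (p : sMap X Y) : Prop :=
  forall (n : nat) (u : sMap (Boundary n) X) (v : sMap (Delta n) Y),
    (forall m x, p m (u m x) = v m (bd_incl n m x)) ->
    exists w : sMap (Delta n) X,
      (forall m x, w m (bd_incl n m x) = u m x) /\ (forall m x, p m (w m x) = v m x).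

(* acyclic fibrations of Pos (restricted Thomason model structure):
   Ex^2 N f is an acyclic fibration of simplicial sets *)
Definition pos_acyclic_fibration (P Q : Poset) (f : Mono P Q) : Prop :=
  sset_acyclic_fibration (ExMap (ExMap (NerveMap f))).

(* cofibrant object: the map from the initial (empty) poset has the left
   lifting property against all acyclic fibrations; since the square's
   top edge is from the empty poset, this amounts to lifting maps A -> Q. *)
Definition pos_cofibrant (A : Poset) : Prop :=
  forall (P Q : Poset) (f : Mono P Q), pos_acyclic_fibration f ->
    forall h : Mono A Q, exists l : Mono A P, forall a : A, f (l a) = h a.

Inductive Aelt := a1 | a2 | b1 | b2 | c1 | c2.

Definition Alevel (x : Aelt) : nat :=
  match x with a1 | a2 => 0 | b1 | b2 => 1 | c1 | c2 => 2 end.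

Definition Ale (x y : Aelt) : Prop := x = y \/ Alevel x < Alevel y.

Definition Aposet : Poset.
Proof.
refine (@Build_Poset Aelt Ale _ _ _).
- by move=> x; left.
- move=> x y [//|h1] [E|h2]; first by [].
  by have := ltn_trans h1 h2; rewrite ltnn.
- move=> x y z [->|h1] [<-|h2]; [by left|by right|by right|].
  by right; exact: ltn_trans h1 h2.
Defined.

(* Main.v *)
From Stdlib Require Import FunctionalExtensionality ProofIrrelevance Eqdep_dec PeanoNat ClassicalEpsilon List.
Require Import Defs.
From mathcomp Require Import all_boot zify.
Set Implicit Arguments. Unset Strict Implicit. Unset Printing Implicit Defensive.

(* Proof idea: build the "free" poset X of cells obtained by
   attaching cones sd^2 Delta^n along sd^2 dDelta^n over A (a small-object style
   construction); the projection X -> A is an acyclic fibration (lifting by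
   attaching a new cell), but admits no section, by a descent on cell heights. *)

Lemma setT_nonempty k : [set: 'I_k.+1] != set0.
Proof. by apply/set0Pn; exists ord0. Qed.

Definition mksub k (A : {set 'I_k.+1}) : subs k :=
  insubd (exist (fun A : {set 'I_k.+1} => A != set0) setT (setT_nonempty k)) A.

Lemma mksubE k (A : {set 'I_k.+1}) : A != set0 -> sval (mksub A) = A.
Proof. by move=> H; rewrite /mksub insubdK. Qed.

Definition SS n := {set {set 'I_n.+1}}.

Definition chainb n (s : SS n) :=
  [forall T in s, [forall T' in s, (T \subset T') || (T' \subset T)]].
Definition Cvalidb n (s : SS n) :=
  [&& s != set0, [forall T in s, T != set0] & chainb s].
Definition rhovalidb n (s : SS n) :=
  [forall T in s, (T != set0) && (T != setT)] && chainb s.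
Definition C'validb n (s : SS n) := (s != set0) && rhovalidb s.

Lemma sub_nonempty' (T : finType) (A B : {set T}) : A \subset B -> A != set0 -> B != set0.
Proof. by move=> /subsetP H /set0Pn [x /H Hx]; apply/set0Pn; exists x. Qed.

Definition lowS k (S : {set 'I_k.+1}) : nat := k - \max_(y in S) (k - nat_of_ord y).

Lemma lowS_mem k (S : {set 'I_k.+1}) : S != set0 -> exists2 y, y \in S & nat_of_ord y = lowS S.
Proof.
move=> H; have H' : 0 < #|mem S| by rewrite card_gt0.
have [y Hy E] := @eq_bigmax_cond _ (mem S) (fun y : 'I_k.+1 => k - nat_of_ord y) H'.
by exists y => //; rewrite /lowS E subKn // -ltnS ltn_ord.
Qed.

Lemma lowS_le k (S : {set 'I_k.+1}) y : y \in S -> lowS S <= y.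
Proof.
move=> Hy; rewrite /lowS.
have := @leq_bigmax_cond _ (mem S) (fun y : 'I_k.+1 => k - nat_of_ord y) y Hy=> h; set M := \max_(_ in _) _ in h *; lia.
Qed.

Definition retr k (S : {set 'I_k.+1}) (x : 'I_k.+1) : 'I_k.+1 :=
  inord (\max_(y in S | nat_of_ord y <= maxn x (lowS S)) nat_of_ord y).

Lemma retr_max_le k (S : {set 'I_k.+1}) x : \max_(y in S | nat_of_ord y <= maxn x (lowS S)) nat_of_ord y <= k.
Proof. by apply/bigmax_leqP => y _; rewrite -ltnS. Qed.

Lemma retr_val k (S : {set 'I_k.+1}) x :
  nat_of_ord (retr S x) = \max_(y in S | nat_of_ord y <= maxn x (lowS S)) nat_of_ord y.
Proof. by rewrite /retr inordK // ltnS retr_max_le. Qed.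

Lemma retr_mem k (S : {set 'I_k.+1}) x : S != set0 -> retr S x \in S.
Proof.
move=> H; have [y0 Hy0 E0] := lowS_mem H.
pose A := [pred y : 'I_k.+1 | (y \in S) && (nat_of_ord y <= maxn x (lowS S))].
have HA : 0 < #|A|.
  apply/card_gt0P; exists y0; rewrite !inE Hy0 /= E0; lia.
have [y Hy E] := @eq_bigmax_cond _ A (fun y : 'I_k.+1 => nat_of_ord y) HA.
have -> : retr S x = y by apply: ord_inj; rewrite retr_val E.
by move: Hy; rewrite !inE => /andP [].
Qed.

Lemma retr_id k (S : {set 'I_k.+1}) x : x \in S -> retr S x = x.
Proof.
move=> Hx; apply: ord_inj; rewrite retr_val.
have hl := lowS_le Hx.
apply/eqP; rewrite eqn_leq; apply/andP; split.
  apply/bigmax_leqP => y /andP [_ h]; lia.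
have := @leq_bigmax_cond _ [pred y : 'I_k.+1 | (y \in S) && (nat_of_ord y <= maxn x (lowS S))]
  (fun y : 'I_k.+1 => nat_of_ord y) x; rewrite !inE Hx /=; apply; lia.
Qed.

Lemma retr_mono k (S : {set 'I_k.+1}) (x x' : 'I_k.+1) : x <= x' -> retr S x <= retr S x'.
Proof.
move=> h; rewrite !retr_val; apply/bigmax_leqP => y /andP [Hy h'].
apply: (@leq_bigmax_cond _ [pred y : 'I_k.+1 | (y \in S) && (nat_of_ord y <= maxn x' (lowS S))]
  (fun y : 'I_k.+1 => nat_of_ord y) y); rewrite !inE Hy /=; lia.
Qed.

Definition retrd k (S : {set 'I_k.+1}) : dmono k k := exist (fun f : 'I_k.+1 -> 'I_k.+1 => forall i j : 'I_k.+1, i <= j -> f i <= f j) (retr S) (fun i j h => retr_mono S h).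

Lemma retr_im k (S : {set 'I_k.+1}) : S != set0 -> retr S @: setT = S.
Proof.
move=> H; apply/setP => y; apply/imsetP/idP => [[x _ ->]|Hy]; first exact: retr_mem.
by exists y => //; rewrite retr_id.
Qed.

Lemma chainP n (s : SS n) T T' : chainb s -> T \in s -> T' \in s -> (T \subset T') || (T' \subset T).
Proof. by move=> /forall_inP H HT HT'; have /forall_inP := H T HT; apply. Qed.

Lemma card_le_ord m (T : {set 'I_m.+1}) : #|T| <= m.+1.
Proof. by have := max_card (mem T); rewrite card_ord. Qed.

Definition gamf m (s : SS m) (i : 'I_m.+1) : {set 'I_m.+1} := \bigcap_(T in s | i < #|T|) T.

Lemma gamf_mono m (s : SS m) (i i' : 'I_m.+1) : i <= i' -> gamf s i \subset gamf s i'.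
Proof.
move=> h; apply/subsetP => x /bigcapP H; apply/bigcapP => T /andP [HT h'].
by apply: H; rewrite HT /=; exact: leq_ltn_trans h h'.
Qed.

Lemma chain_eq m (s : SS m) T T' : chainb s -> T \in s -> T' \in s -> #|T| <= #|T'| -> T \subset T'.
Proof.
move=> Hc HT HT' h; case/orP: (chainP Hc HT HT') => // H.
by have /eqP <- : T' == T by rewrite eqEcard H h.
Qed.

Lemma gamf_ne m (s : SS m) i : Cvalidb s -> gamf s i != set0.
Proof.
move=> /and3P [_ /forall_inP Hne Hc].
pose A := [pred T : {set 'I_m.+1} | (T \in s) && (i < #|T|)].
case: (posnP #|A|) => HA.
  have -> : gamf s i = setT.
    apply/setP => x; rewrite inE; apply/bigcapP => T HT.
    by have := card0_eq HA T; rewrite !inE HT.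
  exact: setT_nonempty.
have [T0 HT0 E] := @eq_bigmax_cond _ A (fun T : {set 'I_m.+1} => m.+2 - #|T|) HA.
move: HT0; rewrite !inE => /andP [HT0 hi].
apply: sub_nonempty' (Hne _ HT0).
apply/subsetP => x Hx; apply/bigcapP => T /andP [HT hT].
have : T0 \subset T.
  apply: (chain_eq Hc HT0 HT).
  have := @leq_bigmax_cond _ A (fun T : {set 'I_m.+1} => m.+2 - #|T|) T; rewrite !inE HT hT E.
  move=> /(_ erefl); have := card_le_ord T; have := card_le_ord T0; lia.
by move/subsetP; apply.
Qed.

Lemma card_ne m (T : {set 'I_m.+1}) : T != set0 -> 0 < #|T|.
Proof. by rewrite card_gt0. Qed.

Lemma gamf_T m (s : SS m) T : Cvalidb s -> T \in s -> gamf s (inord (#|T|.-1)) = T.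
Proof.
move=> Hv HT; move: (Hv) => /and3P [_ /forall_inP Hne Hc].
have h0 := card_ne (Hne _ HT); have h1 := card_le_ord T.
have Ei : nat_of_ord (inord (#|T|.-1) : 'I_m.+1) = #|T|.-1 by rewrite inordK //; lia.
apply/eqP; rewrite eqEsubset; apply/andP; split.
  by apply: bigcap_inf; rewrite HT Ei /= ltn_predL.
apply/subsetP => x Hx; apply/bigcapP => T' /andP [HT' h'].
have : T \subset T' by apply: (chain_eq Hc HT HT'); move: h'; rewrite Ei; lia.
by move/subsetP; apply.
Qed.

Definition gamv m (s : SS m) (i : 'I_m.+1) : subs m :=
  mksub (if Cvalidb s then gamf s i else setT).

Lemma gamv_mono m (s : SS m) (i j : 'I_m.+1) : i <= j -> sval (gamv s i) \subset sval (gamv s j).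
Proof.
move=> h; rewrite /gamv; case: (boolP (Cvalidb s)) => H.
  by rewrite !mksubE ?gamf_ne //; exact: gamf_mono.
by rewrite !mksubE ?setT_nonempty.
Qed.

Definition gam m (s : SS m) : Nerve (SubPoset m) m := exist _ (gamv s) (@gamv_mono m s).

Lemma gamE m (s : SS m) (T : {set 'I_m.+1}) : Cvalidb s -> T \in s -> sval (sval (gam s) (inord (#|T|.-1))) = T.
Proof. by move=> Hv HT; rewrite /= /gamv Hv mksubE ?gamf_ne // gamf_T. Qed.

Definition Sz m (s : SS m) : {set 'I_m.+1} := [set (inord (#|T|.-1) : 'I_m.+1) | T : {set 'I_m.+1} in s].

Definition img m k (t : Nerve (SubPoset m) k) (S : {set 'I_k.+1}) : SS m :=
  [set sval (sval t x) | x in S].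

Definition ptN (R : Poset) (r : R) : Nerve R 0 :=
  exist (fun f : 'I_1 -> R => forall i j : 'I_1, i <= j -> ple (f i) (f j)) (fun _ => r) (fun _ _ _ => ple_refl r).

Definition ev (P : Poset) m (Th : Ex (Ex (Nerve P)) m) k (t : Nerve (SubPoset m) k)
  j (p : Nerve (SubPoset k) j) (i : 'I_j.+1) : P :=
  sval (((Th : sMap (Nerve (SubPoset m)) (Ex (Nerve P))) k t : sMap (Nerve (SubPoset k)) (Nerve P)) j p) i.

Definition pos (P : Poset) m (Th : Ex (Ex (Nerve P)) m) (s : SS m) : P :=
  ev Th (gam s) (@ptN (SubPoset m) (mksub (Sz s))) ord0.

Lemma evpt (R P : Poset) (phi : sMap (Nerve R) (Nerve P)) j (p : Nerve R j) i :
  sval (phi j p) i = sval (phi 0 (ptN (sval p i))) ord0.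
Proof.
pose c : dmono 0 j := exist (fun f : 'I_1 -> 'I_j.+1 => forall a b : 'I_1, a <= b -> f a <= f b)
  (fun _ => i) (fun _ _ _ => leqnn i).
have E : smap c p = ptN (sval p i) by apply: sig_fun_eq.
by rewrite -E (snat phi c p).
Qed.

Lemma evnat (P : Poset) m (Th : Ex (Ex (Nerve P)) m) k k' (d : dmono k' k)
  (t : Nerve (SubPoset m) k) j (p : Nerve (SubPoset k') j) i :
  ev Th (smap d t) p i = ev Th t (NerveMap (SubPush d) j p) i.
Proof. by rewrite /ev (snat Th d t). Qed.

Lemma img_Cvalid m k (t : Nerve (SubPoset m) k) (S : {set 'I_k.+1}) : S != set0 -> Cvalidb (img t S).
Proof.
move=> /set0Pn [x0 Hx0]; apply/and3P; split.
- by apply/set0Pn; exists (sval (sval t x0)); apply: imset_f.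
- by apply/forall_inP => T /imsetP [x _ ->]; exact: (svalP (sval t x)).
- apply/forall_inP => T /imsetP [x _ ->]; apply/forall_inP => T' /imsetP [y _ ->].
  by case: (leqP x y) => h; [rewrite (svalP t x y h)|rewrite (svalP t y x (ltnW h)) orbT].
Qed.

Lemma inord_mono m a b : a <= b -> b <= m -> (inord a : 'I_m.+1) <= (inord b : 'I_m.+1).
Proof. by move=> h1 h2; rewrite !inordK ?ltnS // (leq_trans h1). Qed.

Definition fullsub k : subs k := exist _ setT (setT_nonempty k).

Lemma evD (P : Poset) m (Th : Ex (Ex (Nerve P)) m) k (t : Nerve (SubPoset m) k) j
  (p : Nerve (SubPoset k) j) i : ev Th t p i = pos Th (img t (sval (sval p i))).
Proof.
rewrite /ev evpt -/(ev Th t (ptN (sval p i)) ord0).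
set S := sval (sval p i).
have HS : S != set0 by exact: (svalP (sval p i)).
have E1 : @ptN (SubPoset k) (sval p i) = NerveMap (SubPush (retrd S)) 0 (@ptN (SubPoset k) (fullsub k)).
  by apply: sig_fun_eq => x; apply: sig_eq; rewrite /= retr_im.
rewrite E1 -evnat.
set s := img t S.
have Hs : Cvalidb s by exact: img_Cvalid.
have epsm : forall (x y : 'I_k.+1), x <= y ->
   nat_of_ord (inord (#|sval (sval t (retr S x))|.-1) : 'I_m.+1) <= nat_of_ord (inord (#|sval (sval t (retr S y))|.-1) : 'I_m.+1).
  move=> x y h; apply: inord_mono.
    by rewrite -!subn1 leq_sub2r // subset_leq_card // (svalP t _ _ (retr_mono S h)).
  by have := card_le_ord (sval (sval t (retr S y))); lia.
pose eps : dmono k m := exist (fun f : 'I_k.+1 -> 'I_m.+1 => forall a b : 'I_k.+1, a <= b -> f a <= f b) _ epsm.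
have E2 : smap (retrd S) t = smap eps (gam s).
  apply: sig_fun_eq => x; apply: sig_eq; rewrite /= -/(sval (sval (gam s) _)) gamE //.
  by apply: imset_f; exact: retr_mem.
rewrite E2 evnat /pos; congr ev.
apply: sig_fun_eq => x; apply: sig_eq; rewrite /= mksubE; last first.
  by have := Hs => /and3P [/set0Pn [T HT] _ _]; apply/set0Pn; exists (inord (#|T|.-1)); apply: imset_f.
apply/setP => y; apply/imsetP/imsetP => [[z _ ->]|[T HT ->]].
  by exists (sval (sval t (retr S z))) => //; apply: imset_f; exact: retr_mem.
case/imsetP: HT => z Hz ->; exists z; first by rewrite in_setT.
by rewrite /eps /= retr_id.
Qed.

Lemma Ex2_ext (P : Poset) m (T1 T2 : Ex (Ex (Nerve P)) m) :
  (forall k t j p i, @ev P m T1 k t j p i = @ev P m T2 k t j p i) -> T1 = T2.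
Proof.
move=> H; apply: sMap_ext => k t; apply: sMap_ext => j p; apply: sig_fun_eq => i.
exact: H.
Qed.

Lemma img_gam m (s s' : SS m) : Cvalidb s' -> s \subset s' -> img (gam s') (Sz s) = s.
Proof.
move=> Hv Hs; apply/setP => T; apply/imsetP/idP => [[x /imsetP [T0 HT0 ->] ->]|HT].
  by rewrite gamE // (subsetP Hs).
by exists (inord (#|T|.-1)); [apply: imset_f|rewrite gamE // (subsetP Hs)].
Qed.

Lemma Sz_ne m (s : SS m) : s != set0 -> Sz s != set0.
Proof. by move=> /set0Pn [T HT]; apply/set0Pn; exists (inord (#|T|.-1)); apply: imset_f. Qed.

Lemma Cvalid_ne m (s : SS m) : Cvalidb s -> s != set0.
Proof. by case/and3P. Qed.

Definition pi1 m (A B : {set 'I_m.+1}) (i : 'I_2) : subs m := mksub (if i == ord0 then A else B).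

Lemma pi1_mono m (A B : {set 'I_m.+1}) : A != set0 -> A \subset B ->
  forall i j : 'I_2, i <= j -> sval (pi1 A B i) \subset sval (pi1 A B j).
Proof.
move=> HA HAB; have HB := sub_nonempty' HAB HA.
by move=> [[|[|i']] Hi] [[|[|j']] Hj] //= h; rewrite /pi1 /= !mksubE.
Qed.

Lemma pos_mono (P : Poset) m (Th : Ex (Ex (Nerve P)) m) (s s' : SS m) :
  Cvalidb s -> Cvalidb s' -> s \subset s' -> ple (pos Th s) (pos Th s').
Proof.
move=> Hv Hv' Hs.
have HA := Sz_ne (Cvalid_ne Hv).
have HAB : Sz s \subset Sz s' by apply: imsetS.
pose p : Nerve (SubPoset m) 1 :=
  exist (fun f : 'I_2 -> subs m => forall a b : 'I_2, a <= b -> sval (f a) \subset sval (f b)) _ (pi1_mono HA HAB).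
pose phi : sMap (Nerve (SubPoset m)) (Nerve P) := (Th : sMap (Nerve (SubPoset m)) (Ex (Nerve P))) m (gam s').
have := svalP (phi 1 p) ord0 ord_max isT.
have -> : sval (phi 1 p) ord0 = ev Th (gam s') p ord0 by [].
have -> : sval (phi 1 p) ord_max = ev Th (gam s') p ord_max by [].
rewrite !evD /= /pi1 /= !mksubE //.
  by rewrite img_gam // img_gam.
exact: sub_nonempty' HAB HA.
Qed.

Definition simg m m' (f : 'I_m'.+1 -> 'I_m.+1) (s : SS m') : SS m := [set f @: T | T : {set 'I_m'.+1} in s].

Lemma evsmap (P : Poset) m m' (d : dmono m' m) (Th : Ex (Ex (Nerve P)) m) k t j p i :
  @ev P m' (smap d Th) k t j p i = ev Th (NerveMap (SubPush d) k t) p i.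
Proof. by []. Qed.

Lemma img_push m m' (d : dmono m' m) k (t : Nerve (SubPoset m') k) S :
  img (NerveMap (SubPush d) k t) S = simg (sval d) (img t S).
Proof. by rewrite /img /simg -imset_comp. Qed.

Lemma pos_push (P : Poset) m m' (d : dmono m' m) (Th : Ex (Ex (Nerve P)) m) (s : SS m') :
  Cvalidb s -> pos (smap d Th) s = pos Th (simg (sval d) s).
Proof.
move=> Hv; rewrite /pos evsmap evD img_push /= mksubE ?Sz_ne ?Cvalid_ne //.
by rewrite img_gam.
Qed.

Lemma ev_f (P Q : Poset) (f : Mono P Q) m (Th : Ex (Ex (Nerve P)) m) k t j p i :
  ev (ExMap (ExMap (NerveMap f)) m Th) t p i = f (@ev P m Th k t j p i).
Proof. by []. Qed.

Inductive X := xbase | mk (n : nat) (u : SS n -> X) (v : SS n -> Aelt) (r : SS n).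

Fixpoint xle (x y : X) : Prop :=
  match y with
  | xbase => x = xbase
  | mk n u v r => (exists r', x = mk u v r' /\ r' \subset r) \/ (r != set0 /\ xle x (u r))
  end.

Definition xf (x : X) : Aelt :=
  match x with xbase => a1 | mk n u v r => v (r :|: [set setT]) end.

Fixpoint xvalid (x : X) : Prop :=
  match x with
  | xbase => False
  | mk n u v r =>
    rhovalidb r /\ (forall s, C'validb s -> xvalid (u s)) /\
    (forall s s', C'validb s -> C'validb s' -> s \subset s' -> xle (u s) (u s')) /\
    (forall s, C'validb s -> xf (u s) = v s) /\
    (forall s s', Cvalidb s -> Cvalidb s' -> s \subset s' -> Ale (v s) (v s'))
  end.

Fixpoint height (x : X) : nat :=
  match x with xbase => 0 | mk n u v r => (\max_(s : SS n) height (u s)).+1 end.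

Lemma height_u n u v r s : height (u s) < height (@mk n u v r).
Proof. by rewrite /= ltnS (leq_bigmax s). Qed.

Lemma xle_height x y : xle x y -> height x <= height y.
Proof.
elim: y => [|n u IH v r] /=; first by move=> ->.
case=> [[r' [-> _]]|[_ H]] //=.
apply: leq_trans (IH _ H) _; exact: ltnW (height_u u v r r).
Qed.

Lemma xle_refl x : xle x x.
Proof. case: x => [|n u v r] /=; [by []|left; exists r; split=> //]. Qed.

Definition rho_of (x : X) : {n : nat & SS n} :=
  match x with xbase => existT _ 0 set0 | mk n u v r => existT _ n r end.

Lemma mk_inj n u v r r' : @mk n u v r = mk u v r' -> r = r'.
Proof.
move=> E; have := f_equal rho_of E => /= E'.
exact: (inj_pair2_eq_dec _ Nat.eq_dec _ _ _ _ E').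
Qed.

Lemma xle_antisym x y : xle x y -> xle y x -> x = y.
Proof.
case: y => [|n u v r] /=; first by move=> ->.
case=> [[r' [-> Hs]]|[_ H]] /=.
  case=> [[r'' [E Hs']]|[_ H]].
    move/mk_inj: E => E; subst r''.
    by congr mk; apply/eqP; rewrite eqEsubset Hs Hs'.
  have := xle_height H; have := height_u u v r' r'.
  by move=> h1 h2; have := leq_trans h1 h2; rewrite /= ltnn.
move=> H2; have h1 := xle_height H; have h2 := xle_height H2.
have h3 := height_u u v r r.
by have := leq_trans h3 (leq_trans h2 h1); rewrite ltnn.
Qed.

Lemma chainb_sub n (s s' : SS n) : s' \subset s -> chainb s -> chainb s'.
Proof.
move=> /subsetP Hs /forall_inP H; apply/forall_inP => T /Hs HT; apply/forall_inP => T' /Hs HT'.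
by have /forall_inP := H T HT; apply.
Qed.

Lemma rhovalid_sub n (s s' : SS n) : s' \subset s -> rhovalidb s -> rhovalidb s'.
Proof.
move=> Hs /andP [/forall_inP H1 H2]; apply/andP; split; last exact: chainb_sub H2.
by apply/forall_inP => T /(subsetP Hs) /H1.
Qed.

Lemma rhoT_Cvalid n (s : SS n) : rhovalidb s -> Cvalidb (s :|: [set setT]).
Proof.
move=> /andP [/forall_inP H1 /forall_inP H2]; apply/and3P; split.
- by apply/set0Pn; exists setT; rewrite !inE eqxx orbT.
- apply/forall_inP => T; rewrite !inE => /orP [/H1 /andP [] //|/eqP ->].
  by apply/set0Pn; exists ord0.
- apply/forall_inP => T HT; apply/forall_inP => T' HT'.
  move: HT HT'; rewrite !inE => /orP [HT|/eqP ->] /orP [HT'|/eqP ->]; rewrite ?subsetT ?orbT //.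
  by have /forall_inP := H2 T HT; apply.
Qed.

Lemma C'valid_Cvalid n (s : SS n) : C'validb s -> Cvalidb s.
Proof.
move=> /andP [H0 /andP [/forall_inP H1 H2]]; apply/and3P; split=> //.
by apply/forall_inP => T /H1 /andP [].
Qed.

Lemma rho_C'valid n (s : SS n) : s != set0 -> rhovalidb s -> C'validb s.
Proof. by move=> H0 H1; apply/andP. Qed.

Lemma sub_nonempty (T : finType) (A B : {set T}) : A \subset B -> A != set0 -> B != set0.
Proof. by move=> /subsetP H /set0Pn [x /H Hx]; apply/set0Pn; exists x. Qed.

Lemma xle_trans z : xvalid z -> forall x y, xle x y -> xle y z -> xle x z.
Proof.
elim: z => [|n u IH v r] //= [Hr [Hu [Hm [Hf Hv]]]] x y Hxy.
case=> [[r' [Ey Hs]]|[Hr0 Hy]].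
  subst y; move: Hxy => /= [[r'' [Ex Hs']]|[Hr'0 Hx]].
    by left; exists r''; split=> //; exact: subset_trans Hs' Hs.
  right; split.
    exact: sub_nonempty Hs Hr'0.
  have Hc' : C'validb r' by apply: rho_C'valid => //; exact: rhovalid_sub Hs Hr.
  have Hc : C'validb r.
    apply: rho_C'valid => //.
    exact: sub_nonempty Hs Hr'0.
  exact: (IH r (Hu r Hc) x (u r') Hx (Hm _ _ Hc' Hc Hs)).
right; split=> //.
have Hc : C'validb r by apply: rho_C'valid.
exact: (IH r (Hu r Hc) x y Hxy Hy).
Qed.

Definition Xposet : Poset.
Proof.
refine (@Build_Poset {x : X | xvalid x} (fun x y => xle (sval x) (sval y)) _ _ _).
- by move=> x; exact: xle_refl.
- by move=> x y h1 h2; apply: sig_eq; exact: xle_antisym.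
- by move=> x y z h1 h2; exact: (xle_trans (svalP z) h1 h2).
Defined.

Lemma Ale_trans x y z : Ale x y -> Ale y z -> Ale x z.
Proof. exact: (@ple_trans Aposet). Qed.

Lemma xf_mono y : xvalid y -> forall x, xle x y -> Ale (xf x) (xf y).
Proof.
elim: y => [|n u IH v r] //= [Hr [Hu [Hm [Hf Hv]]]] x.
case=> [[r' [-> Hs]]|[Hr0 Hx]] /=.
  apply: Hv; try exact: rhoT_Cvalid.
    exact: rhoT_Cvalid (rhovalid_sub Hs Hr).
  exact: setSU.
have Hc : C'validb r by apply: rho_C'valid.
apply: Ale_trans (IH r (Hu r Hc) x Hx) _; rewrite Hf //.
apply: Hv; [exact: C'valid_Cvalid|exact: rhoT_Cvalid|exact: subsetUl].
Qed.

Definition fX : Mono Xposet Aposet.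
Proof.
refine (@Build_Mono Xposet Aposet (fun x => xf (sval x)) _).
by move=> x y h; exact: (xf_mono (svalP y) h).
Defined.

Definition uv_of (x : X) : {n : nat & ((SS n -> X) * (SS n -> Aelt))%type} :=
  match x with xbase => existT _ 0 (fun _ => xbase, fun _ => a1) | mk n u v r => existT _ n (u, v) end.

Lemma mk_cell n u v r n' u' v' r' : @mk n u v r = @mk n' u' v' r' ->
  forall r2 : SS n', exists r3, @mk n' u' v' r2 = @mk n u v r3.
Proof.
move=> E.
have En : n = n' by have := f_equal (fun x => projT1 (uv_of x)) E.
subst n'.
have := inj_pair2_eq_dec _ Nat.eq_dec _ _ _ _ (f_equal uv_of E) => /= [[-> ->]].
by move=> r2; exists r2.
Qed.

Lemma argmax_ex (g : Aelt -> nat) : exists x0, forall a, g a <= g x0.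
Proof.
have H : forall (l : list Aelt) d, exists x, forall a, (a = d \/ List.In a l) -> g a <= g x.
  elim=> [|y l IH] d.
    by exists d => a [->|[]].
  have [x Hx] := IH d.
  case: (leqP (g y) (g x)) => h.
    exists x => a [E|[E|H]].
    - by apply: Hx; left.
    - by subst a.
    - by apply: Hx; right.
  exists y => a [E|[E|H]]; last first.
  - exact: leq_trans (Hx _ (or_intror H)) (ltnW h).
  - by subst a.
  - by subst a; exact: leq_trans (Hx _ (or_introl erefl)) (ltnW h).
have [x Hx] := H [:: a2; b1; b2; c1; c2] a1.
by exists x => a; apply: Hx; case: a; simpl; tauto.
Qed.

Definition under (x : X) : X := match x with xbase => xbase | mk n u v r => u r end.

Definition hsum (s : Aelt -> X) :=
  height (s a1) + height (s a2) + height (s b1) + height (s b2) + height (s c1) + height (s c2).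

Lemma Ale_cases x y : Ale x y <-> (x = y \/ Alevel x < Alevel y).
Proof. by []. Qed.

Lemma nosec N : forall s : Aelt -> X, hsum s <= N -> (forall a, xvalid (s a)) ->
  (forall a b, Ale a b -> xle (s a) (s b)) -> (forall a, xf (s a) = a) -> False.
Proof.
elim: N => [|N IH] s Hsum Hval Hmono Hf.
  have h : 0 < height (s a1) by move: (Hval a1); case: (s a1).
  by move: Hsum; rewrite /hsum; lia.
have [x0 Hx0] := argmax_ex (fun a => height (s a)).
move Es0 : (s x0) => s0; case: s0 Es0 => [|n u v r0] Es0.
  by have := Hval x0; rewrite Es0.
have := Hval x0; rewrite Es0 => /= [[Hr0 [Hu [Hm [Hfu Hv]]]]].
pose Nn a := exists r, s a = mk u v r.
have hN : forall a, Nn a -> height (s a) = height (s x0).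
  by move=> a [r ->]; rewrite Es0.
have K1 : forall a b, Ale a b -> Nn a -> Nn b.
  move=> a b Hab [ra Ea]; have := Hmono a b Hab; rewrite Ea.
  move Esb : (s b) => sb; case: sb Esb => [|n' u' v' r'] Esb.
    by have := Hval b; rewrite Esb.
  case=> [[r'' [E _]]|[_ H]].
    have [r3 E3] := mk_cell E r'; exists r3; by rewrite Esb.
  have h1 := xle_height H; have h2 := height_u u' v' r' r'.
  have h3 := Hx0 b; rewrite Esb Es0 in h3.
  have h4 : height (mk u v ra) = height (mk u v r0) by [].
  move: h1 h2 h3; rewrite h4 => h1 h2 h3.
  by have := leq_trans h2 (leq_trans h3 h1); rewrite ltnn.
have K2 : forall y a ra, s a = mk u v ra -> Ale y a -> ~ Nn y ->
    ra != set0 /\ xle (s y) (u ra).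
  move=> y a ra Ea Hya HNy; have := Hmono y a Hya; rewrite Ea.
  case=> [[r'' [E _]]|[H1 H2]]; last by [].
  by case: HNy; exists r''.
have K3 : forall y a ry ra, s y = mk u v ry -> s a = mk u v ra -> Ale y a -> ry \subset ra.
  move=> y a ry ra Ey Ea Hya; have := Hmono y a Hya; rewrite Ea.
  case=> [[r'' [E Hs]]|[_ H]].
    by rewrite Ey in E; move/mk_inj: E => ->.
  have h1 := xle_height H; have h2 := height_u u v ra ra.
  rewrite Ey in h1.
  have h4 : height (mk u v ry) = height (mk u v ra) by [].
  by move: h1; rewrite h4 => h1; have := leq_trans h2 h1; rewrite ltnn.
have Vle : forall a ra, s a = mk u v ra -> ra != set0 -> Ale (v ra) a.
  move=> a ra Ea Hne; have := Hf a; rewrite Ea /= => <-.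
  have := Hval a; rewrite Ea => /= [[Hra _]].
  apply: Hv; [|exact: rhoT_Cvalid|exact: subsetUl].
  by apply: C'valid_Cvalid; apply: rho_C'valid.
have Hvalr : forall a ra, s a = mk u v ra -> rhovalidb ra.
  by move=> a ra Ea; have := Hval a; rewrite Ea => /= [[Hra _]].
have lt_ab : forall i j, Ale (match i with 0 => a1 | _ => a2 end) (match j with 0 => b1 | _ => b2 end).
  by move=> [|i] [|j]; right.
case: (classic (Nn b1 /\ Nn b2)) => [[[rb1 Eb1] [rb2 Eb2]] | Hnb].
  have [rc1 Ec1] := K1 b1 c1 (or_intror erefl) (ex_intro _ rb1 Eb1).
  have [rc2 Ec2] := K1 b1 c2 (or_intror erefl) (ex_intro _ rb1 Eb1).
  have s11 := K3 _ _ _ _ Eb1 Ec1 (or_intror erefl).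
  have s12 := K3 _ _ _ _ Eb1 Ec2 (or_intror erefl).
  have s21 := K3 _ _ _ _ Eb2 Ec1 (or_intror erefl).
  have s22 := K3 _ _ _ _ Eb2 Ec2 (or_intror erefl).
  have Vm : xvalid (mk u v (rb1 :|: rb2)).
    split; last by [].
    by apply: rhovalid_sub (Hvalr _ _ Ec1); rewrite subUset s11 s21.
  have Hm1 : xle (s b1) (mk u v (rb1 :|: rb2)) by rewrite Eb1; left; exists rb1; split=> //; exact: subsetUl.
  have Hm2 : xle (s b2) (mk u v (rb1 :|: rb2)) by rewrite Eb2; left; exists rb2; split=> //; exact: subsetUr.
  have Hm3 : xle (mk u v (rb1 :|: rb2)) (s c1) by rewrite Ec1; left; exists (rb1 :|: rb2); split=> //; rewrite subUset s11 s21.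
  have Hm4 : xle (mk u v (rb1 :|: rb2)) (s c2) by rewrite Ec2; left; exists (rb1 :|: rb2); split=> //; rewrite subUset s12 s22.
  have h1 := xf_mono Vm Hm1; have h2 := xf_mono Vm Hm2.
  have h3 := xf_mono (Hval c1) Hm3; have h4 := xf_mono (Hval c2) Hm4.
  rewrite !Hf in h1 h2 h3 h4.
  move: h1 h2 h3 h4; case: (xf _) => -[h1|h1] -[h2|h2] -[h3|h3] -[h4|h4] //.
have Na1 : ~ Nn a1.
  by move=> H; apply: Hnb; split; apply: K1 H; right.
have Na2 : ~ Nn a2.
  by move=> H; apply: Hnb; split; apply: K1 H; right.
have NE : forall a ra, s a = mk u v ra -> ra != set0.
  move=> a ra Ea; case: a Ea => Ea.
  - by case: Na1; exists ra.
  - by case: Na2; exists ra.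
  - by case: (K2 a1 b1 ra Ea (or_intror erefl) Na1).
  - by case: (K2 a1 b2 ra Ea (or_intror erefl) Na1).
  - case: (classic (Nn b1)) => Hb1.
      have Hb2 : ~ Nn b2 by move=> H; apply: Hnb.
      by case: (K2 b2 c1 ra Ea (or_intror erefl) Hb2).
    by case: (K2 b1 c1 ra Ea (or_intror erefl) Hb1).
  - case: (classic (Nn b1)) => Hb1.
      have Hb2 : ~ Nn b2 by move=> H; apply: Hnb.
      by case: (K2 b2 c2 ra Ea (or_intror erefl) Hb2).
    by case: (K2 b1 c2 ra Ea (or_intror erefl) Hb1).
have C'ra : forall a ra, s a = mk u v ra -> C'validb ra.
  by move=> a ra Ea; apply: rho_C'valid; [exact: NE Ea|exact: Hvalr Ea].
have lowf : forall y a ra, s a = mk u v ra -> Ale y a -> ~ Nn y -> Ale y (v ra).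
  move=> y a ra Ea Hya Hy; have [_ H] := K2 y a ra Ea Hya Hy.
  have := xf_mono (Hu _ (C'ra _ _ Ea)) H.
  by rewrite Hf Hfu //; exact: C'ra Ea.
have VAb : forall a ra, s a = mk u v ra -> (a = b1 \/ a = b2) -> v ra = a.
  move=> a ra Ea Hab.
  have h0 := Vle a ra Ea (NE _ _ Ea).
  have h1 : Ale a1 (v ra) by apply: lowf Ea _ Na1; case: Hab => ->; right.
  have h2 : Ale a2 (v ra) by apply: lowf Ea _ Na2; case: Hab => ->; right.
  by case: Hab h0 => -> ; case: (v ra) h1 h2 => -[h1|h1] -[h2|h2] -[h0|h0] //.
have lowb : forall b a ra, s a = mk u v ra -> (b = b1 \/ b = b2) -> Ale b a -> Ale b (v ra).
  move=> b a ra Ea Hb Hba; case: (classic (Nn b)) => Hnbb; last exact: lowf Ea Hba Hnbb.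
  case: Hnbb => rb Eb.
  rewrite -{1}(VAb _ _ Eb Hb).
  apply: Hv; [exact: C'valid_Cvalid (C'ra _ _ Eb)|exact: C'valid_Cvalid (C'ra _ _ Ea)|].
  exact: K3 Eb Ea Hba.
have VA : forall a ra, s a = mk u v ra -> v ra = a.
  move=> a ra Ea; case: a Ea => Ea.
  - by case: Na1; exists ra.
  - by case: Na2; exists ra.
  - by apply: VAb Ea _; left.
  - by apply: VAb Ea _; right.
  - have h0 := Vle _ _ Ea (NE _ _ Ea).
    have h1 := lowb b1 _ _ Ea (or_introl erefl) (or_intror erefl).
    have h2 := lowb b2 _ _ Ea (or_intror erefl) (or_intror erefl).
    by case: (v ra) h1 h2 h0 => -[h1|h1] -[h2|h2] -[h0|h0] //.
  - have h0 := Vle _ _ Ea (NE _ _ Ea).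
    have h1 := lowb b1 _ _ Ea (or_introl erefl) (or_intror erefl).
    have h2 := lowb b2 _ _ Ea (or_intror erefl) (or_intror erefl).
    by case: (v ra) h1 h2 h0 => -[h1|h1] -[h2|h2] -[h0|h0] //.
pose s' a := match excluded_middle_informative (Nn a) with left _ => under (s a) | right _ => s a end.
have S1 : forall a ra, s a = mk u v ra -> s' a = u ra.
  move=> a ra Ea; rewrite /s'; case: excluded_middle_informative => [_|H]; first by rewrite Ea.
  by case: H; exists ra.
have S2 : forall a, ~ Nn a -> s' a = s a.
  by move=> a H; rewrite /s'; case: excluded_middle_informative.
have hle : forall a, height (s' a) <= height (s a).
  move=> a; case: (classic (Nn a)) => [[ra Ea]|H]; last by rewrite S2.
  by rewrite (S1 _ _ Ea) Ea ltnW // height_u.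
have hlt : height (s' x0) < height (s x0) by rewrite (S1 _ _ Es0) Es0 height_u.
apply: (IH s').
- have := hle a1; have := hle a2; have := hle b1; have := hle b2; have := hle c1; have := hle c2.
  move: Hsum hlt; rewrite /hsum; case: x0 {Es0 Hx0 hN} => *; lia.
- move=> a; case: (classic (Nn a)) => [[ra Ea]|H]; last by rewrite S2.
  by rewrite (S1 _ _ Ea); apply: Hu; exact: C'ra Ea.
- move=> y a Hya.
  case: (classic (Nn y)) => [[ry Ey]|Hy]; case: (classic (Nn a)) => [[ra Ea]|Ha].
  + rewrite (S1 _ _ Ey) (S1 _ _ Ea); apply: Hm; [exact: C'ra Ey|exact: C'ra Ea|exact: K3 Ey Ea Hya].
  + by case: Ha; apply: K1 Hya _; exists ry.
  + by rewrite (S2 _ Hy) (S1 _ _ Ea); case: (K2 y a ra Ea Hya Hy).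
  + by rewrite (S2 _ Hy) (S2 _ Ha); apply: Hmono.
- move=> a; case: (classic (Nn a)) => [[ra Ea]|H]; last by rewrite S2.
  by rewrite (S1 _ _ Ea) Hfu ?(VA _ _ Ea) //; exact: C'ra Ea.
Qed.

Lemma chain_max m (s : SS m) : Cvalidb s -> exists2 T0, T0 \in s & forall T, T \in s -> T \subset T0.
Proof.
move=> /and3P [H0 _ Hc].
have HA : 0 < #|mem s| by rewrite card_gt0.
have [T0 HT0 E] := @eq_bigmax_cond _ (mem s) (fun T : {set 'I_m.+1} => #|T|) HA.
exists T0 => // T HT; apply: (chain_eq Hc HT HT0).
by rewrite -E; exact: (@leq_bigmax_cond _ (mem s) (fun T : {set 'I_m.+1} => #|T|) T HT).
Qed.

Definition bigU m (s : SS m) : {set 'I_m.+1} := \bigcup_(T in s) T.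

Lemma bigU_max m (s : SS m) : Cvalidb s -> exists2 T0, T0 \in s & bigU s = T0.
Proof.
move=> Hv; have [T0 HT0 H] := chain_max Hv; exists T0 => //.
apply/eqP; rewrite eqEsubset; apply/andP; split.
  by apply/bigcupsP => T /H.
exact: bigcup_sup.
Qed.

Lemma bigU_ne m (s : SS m) : Cvalidb s -> bigU s != set0.
Proof.
move=> Hv; have [T0 HT0 ->] := bigU_max Hv.
by move: Hv => /and3P [_ /forall_inP H _]; apply: H.
Qed.

Lemma bigU_proper m (s : SS m) : C'validb s -> exists j, j \notin bigU s.
Proof.
move=> Hv; have [T0 HT0 ->] := bigU_max (C'valid_Cvalid Hv).
move: Hv => /andP [_ /andP [/forall_inP H _]].
have /andP [_ HT] := H _ HT0.
by apply/existsP; rewrite -(negbK [exists _, _]) negb_exists; apply: contra HT => /forallP H'; apply/eqP/setP => x; rewrite inE; have := H' x; rewrite negbK.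
Qed.

Lemma sub_bigU m (s : SS m) T : T \in s -> T \subset bigU s.
Proof. exact: bigcup_sup. Qed.

Definition retrD n (R : {set 'I_n.+1}) : Delta n n := retrd R.

Definition bdel n (R : {set 'I_n.+1}) (H : exists j, forall i, sval (retrD R) i != j) : Boundary n n :=
  exist _ (retrD R) H.

Lemma forall_of k (R : {set 'I_k.+1}) j : [forall i, retr R i != j] -> forall i, sval (retrD R) i != j.
Proof. by move/forallP. Qed.

Definition bdopt n (R : {set 'I_n.+1}) : option (Boundary n n) :=
  match pickP (fun j => [forall i, retr R i != j]) with
  | Pick j Hj => Some (bdel (ex_intro _ j (forall_of Hj)))
  | Nopick _ => None
  end.

Lemma bdoptE n (R : {set 'I_n.+1}) : (exists j, j \notin R) -> R != set0 ->
  exists b, bdopt R = Some b /\ sval b = retrD R.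
Proof.
move=> [j Hj] HR; rewrite /bdopt; case: pickP => [j' Hj'|H]; first by eexists.
have := H j => /=; move/negbT; rewrite negb_forall => /existsP [i]; rewrite negbK => /eqP E.
by move: Hj; rewrite -E retr_mem.
Qed.

Definition toD n m (x : Delta n m) : dmono m n := x.

Lemma Bnat n (Y : sSet) (u : sMap (Boundary n) Y) m (x : Boundary n m) (b : Boundary n n) :
  (forall i, sval (sval b) (sval (sval x) i) = sval (sval x) i) ->
  u m x = smap (toD (sval x)) (u n b).
Proof.
move=> H; rewrite -snat; congr (u m _).
by apply: sig_eq; apply: sig_fun_eq => i /=; rewrite H.
Qed.

Definition idD n : Delta n n := exist (fun f : 'I_n.+1 -> 'I_n.+1 => forall i j : 'I_n.+1, i <= j -> f i <= f j) id (fun i j h => h).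

Lemma Dnat n (Y : sSet) (v : sMap (Delta n) Y) m (x : Delta n m) :
  v m x = smap (toD x) (v n (idD n)).
Proof. by rewrite -snat; congr (v m _); apply: sig_fun_eq. Qed.

Lemma imset_fix k (f : 'I_k.+1 -> 'I_k.+1) (T : {set 'I_k.+1}) :
  (forall x, x \in T -> f x = x) -> f @: T = T.
Proof.
move=> H; apply/setP => y; apply/imsetP/idP => [[x Hx ->]|Hy]; first by rewrite H.
by exists y => //; rewrite H.
Qed.

Lemma simg_fix k (f : 'I_k.+1 -> 'I_k.+1) (s : SS k) :
  (forall T x, T \in s -> x \in T -> f x = x) -> simg f s = s.
Proof.
move=> H; apply/setP => T; apply/imsetP/idP => [[T' HT' ->]|HT].
  by rewrite imset_fix // => x; apply: H.
by exists T => //; rewrite imset_fix // => x; apply: H.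
Qed.

Lemma simg_retr k (R : {set 'I_k.+1}) (s : SS k) : bigU s \subset R -> simg (retr R) s = s.
Proof.
move=> HR; apply: simg_fix => T x HT Hx; apply: retr_id.
by apply: (subsetP HR); apply: (subsetP (sub_bigU HT)).
Qed.

Definition upos_raw n (u : sMap (Boundary n) (Ex (Ex (Nerve Xposet)))) (s : SS n) : X :=
  match bdopt (bigU s) with Some b => sval (pos (u n b) s) | None => xbase end.

Definition vpos n (v : sMap (Delta n) (Ex (Ex (Nerve Aposet)))) (s : SS n) : Aelt :=
  pos (v n (idD n)) s.

Lemma Ucan n (u : sMap (Boundary n) (Ex (Ex (Nerve Xposet)))) (s : SS n) (b : Boundary n n) R :
  C'validb s -> sval b = retrD R -> bigU s \subset R -> upos_raw u s = sval (pos (u n b) s).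
Proof.
move=> Hv Hb HR.
have [[d Hd] [Eb' /= Hb']] := bdoptE (bigU_proper Hv) (bigU_ne (C'valid_Cvalid Hv)).
subst d.
rewrite /upos_raw Eb' (Bnat u (b := b)); last first.
  move=> i; rewrite Hb /=; apply: retr_id; apply: (subsetP HR).
  exact: retr_mem (bigU_ne (C'valid_Cvalid Hv)).
rewrite pos_push; last exact: C'valid_Cvalid.
by change (sval (toD (retrD (bigU s)))) with (retr (bigU s)); rewrite simg_retr.
Qed.

Definition commutes n (u : sMap (Boundary n) (Ex (Ex (Nerve Xposet))))
  (v : sMap (Delta n) (Ex (Ex (Nerve Aposet)))) :=
  forall m x, ExMap (ExMap (NerveMap fX)) m (u m x) = v m (bd_incl n m x).

Lemma xf_upos n u v : @commutes n u v -> forall s, C'validb s -> xf (upos_raw u s) = vpos v s.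
Proof.
move=> H s Hv.
have [[d Hd] [Eb' /= Hb']] := bdoptE (bigU_proper Hv) (bigU_ne (C'valid_Cvalid Hv)).
subst d; rewrite /upos_raw Eb'.
set b : Boundary n n := exist _ _ Hd.
have -> : xf (sval (pos (u n b) s)) = pos (ExMap (ExMap (NerveMap fX)) n (u n b)) s by [].
rewrite H Dnat pos_push; last exact: C'valid_Cvalid.
by change (sval (toD (bd_incl n n b))) with (retr (bigU s)); rewrite simg_retr.
Qed.

Lemma upos_valid n u s : C'validb s -> xvalid (@upos_raw n u s).
Proof.
move=> Hv.
have [b [Eb _]] := bdoptE (bigU_proper Hv) (bigU_ne (C'valid_Cvalid Hv)).
by rewrite /upos_raw Eb; exact: svalP.
Qed.

Lemma bigU_sub m (s s' : SS m) : s \subset s' -> bigU s \subset bigU s'.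
Proof. by move=> H; apply/bigcupsP => T HT; apply: bigcup_sup; apply: (subsetP H). Qed.

Lemma upos_mono n u s s' : C'validb s -> C'validb s' -> s \subset s' ->
  xle (@upos_raw n u s) (upos_raw u s').
Proof.
move=> Hv Hv' Hs.
have [[d Hd] [Eb /= Hb]] := bdoptE (bigU_proper Hv') (bigU_ne (C'valid_Cvalid Hv')).
subst d; set b : Boundary n n := exist _ _ Hd.
rewrite (Ucan u (b := b) (R := bigU s')) //; last exact: bigU_sub.
rewrite (Ucan u (b := b) (R := bigU s')) //.
exact: (pos_mono (u n b) (C'valid_Cvalid Hv) (C'valid_Cvalid Hv') Hs).
Qed.

Lemma vpos_mono n v s s' : Cvalidb s -> Cvalidb s' -> s \subset s' -> Ale (@vpos n v s) (vpos v s').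
Proof. by move=> h1 h2 h3; have := pos_mono (v n (idD n)) h1 h2 h3. Qed.

Lemma cell_valid n u v r : @commutes n u v -> rhovalidb r -> xvalid (mk (upos_raw u) (vpos v) r).
Proof.
move=> H Hr; split=> //; split; first exact: upos_valid.
split; first exact: upos_mono.
split; first exact: xf_upos.
exact: vpos_mono.
Qed.

Definition Wraw n u v (s : SS n) : X :=
  if (setT \in s) && Cvalidb s then mk (@upos_raw n u) (vpos v) (s :\ setT)
  else if C'validb s then upos_raw u s else mk (upos_raw u) (vpos v) set0.

Lemma rho_del n (s : SS n) : Cvalidb s -> rhovalidb (s :\ setT).
Proof.
move=> /and3P [_ /forall_inP H1 H2]; apply/andP; split; last first.
  by apply: chainb_sub H2; exact: subsetDl.
by apply/forall_inP => T; rewrite !inE => /andP [-> /H1 ->].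
Qed.

Lemma C'_of n (s : SS n) : Cvalidb s -> setT \notin s -> C'validb s.
Proof.
move=> /and3P [H0 /forall_inP H1 H2] HT; rewrite /C'validb H0 /= /rhovalidb H2 andbT.
apply/forall_inP => T HT'; rewrite H1 //=; apply: contraNneq HT => <-; exact: HT'.
Qed.

Lemma rho0 n : rhovalidb (set0 : SS n).
Proof. by apply/andP; split; apply/forall_inP => T; rewrite inE. Qed.

Lemma Wvalid n u v : @commutes n u v -> forall s, xvalid (Wraw u v s).
Proof.
move=> H s; rewrite /Wraw; case: ifP => [/andP [_ Hv]|_].
  by apply: cell_valid => //; exact: rho_del.
case: ifP => Hv; first exact: upos_valid.
by apply: cell_valid => //; exact: rho0.
Qed.

Lemma WrawC' n u v (s : SS n) : C'validb s -> Wraw u v s = upos_raw u s.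
Proof.
move=> Hv; rewrite /Wraw Hv; case: ifP => // /andP [HT _].
by move: Hv => /andP [_ /andP [/forall_inP H _]]; have /andP [_] := H _ HT; rewrite eqxx.
Qed.

Lemma WrawT n u v (s : SS n) : Cvalidb s -> setT \in s -> Wraw u v s = mk (upos_raw u) (vpos v) (s :\ setT).
Proof. by move=> Hv HT; rewrite /Wraw HT Hv. Qed.

Lemma xf_W n u v : @commutes n u v -> forall s, Cvalidb s -> xf (Wraw u v s) = vpos v s.
Proof.
move=> H s Hv; case: (boolP (setT \in s)) => HT.
  by rewrite WrawT //= setUC setD1K.
have Hc : C'validb s by exact: C'_of.
by rewrite WrawC' // (xf_upos H).
Qed.

Lemma W_mono n u v : @commutes n u v -> forall s s', Cvalidb s -> Cvalidb s' -> s \subset s' ->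
  xle (Wraw u v s) (Wraw u v s').
Proof.
move=> H s s' Hv Hv' Hs.
case: (boolP (setT \in s')) => HT'; last first.
  have HT : setT \notin s by apply: contra HT'; apply: (subsetP Hs).
  rewrite !WrawC' ?C'_of //; apply: upos_mono; rewrite ?C'_of //.
rewrite (WrawT _ _ Hv' HT').
case: (boolP (setT \in s)) => HT.
  by rewrite WrawT //; left; eexists; split; first by []; exact: setSD.
rewrite WrawC' ?C'_of //; right.
have Hsub : s \subset s' :\ setT.
  apply/subsetP => T HT0; rewrite !inE (subsetP Hs) // andbT.
  by apply: contraNneq HT => <-.
split; first exact: sub_nonempty' Hsub (Cvalid_ne Hv).
apply: upos_mono => //; first exact: C'_of.
apply: rho_C'valid; [exact: sub_nonempty' Hsub (Cvalid_ne Hv)|exact: rho_del].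
Qed.

Lemma simg_Cvalid m m' (f : 'I_m'.+1 -> 'I_m.+1) (s : SS m') : Cvalidb s -> Cvalidb (simg f s).
Proof.
move=> /and3P [/set0Pn [T0 HT0] /forall_inP H1 H2]; apply/and3P; split.
- by apply/set0Pn; exists (f @: T0); apply: imset_f.
- apply/forall_inP => T /imsetP [T' HT' ->].
  by have /set0Pn [x Hx] := H1 _ HT'; apply/set0Pn; exists (f x); apply: imset_f.
- apply/forall_inP => T /imsetP [T1 HT1 ->]; apply/forall_inP => T' /imsetP [T2 HT2 ->].
  by case/orP: (chainP H2 HT1 HT2) => h; rewrite (imsetS f h) ?orbT.
Qed.

Lemma simgS m m' (f : 'I_m'.+1 -> 'I_m.+1) (s s' : SS m') : s \subset s' -> simg f s \subset simg f s'.
Proof. exact: imsetS. Qed.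

Lemma imgS m k (t : Nerve (SubPoset m) k) (S S' : {set 'I_k.+1}) : S \subset S' -> img t S \subset img t S'.
Proof. exact: imsetS. Qed.

Definition Wpos n u v (H : @commutes n u v) (s : SS n) : Xposet := exist _ (Wraw u v s) (Wvalid H s).

Lemma wob_mono n u v (H : @commutes n u v) m (s : 'I_m.+1 -> 'I_n.+1) k (t : Nerve (SubPoset m) k)
  j (p : Nerve (SubPoset k) j) (a b : 'I_j.+1) : a <= b ->
  ple (Wpos H (simg s (img t (sval (sval p a))))) (Wpos H (simg s (img t (sval (sval p b))))).
Proof.
move=> h.
have Ha : Cvalidb (simg s (img t (sval (sval p a)))).
  by apply: simg_Cvalid; apply: img_Cvalid; exact: (svalP (sval p a)).
have Hb : Cvalidb (simg s (img t (sval (sval p b)))).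
  by apply: simg_Cvalid; apply: img_Cvalid; exact: (svalP (sval p b)).
exact: (W_mono H Ha Hb (simgS s (imgS t (svalP p a b h)))).
Qed.

Definition wob n u v (H : @commutes n u v) m (s : 'I_m.+1 -> 'I_n.+1) k (t : Nerve (SubPoset m) k)
  j (p : Nerve (SubPoset k) j) : Nerve Xposet j :=
  exist (fun g : 'I_j.+1 -> Xposet => forall a b : 'I_j.+1, a <= b -> ple (g a) (g b))
    (fun i => Wpos H (simg s (img t (sval (sval p i))))) (@wob_mono n u v H m s k t j p).

Definition wphi n u v (H : @commutes n u v) m (s : 'I_m.+1 -> 'I_n.+1) k (t : Nerve (SubPoset m) k) :
  sMap (Nerve (SubPoset k)) (Nerve Xposet).
Proof.
refine (@Build_sMap (Nerve (SubPoset k)) (Nerve Xposet) (fun j p => wob H s t p) _).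
by move=> j' j d p; apply: sig_fun_eq.
Defined.

Lemma img_smap m k k' (d : dmono k' k) (t : Nerve (SubPoset m) k) (S : {set 'I_k'.+1}) :
  img (smap d t) S = img t (sval d @: S).
Proof. by rewrite /img -imset_comp. Qed.

Definition wTh n u v (H : @commutes n u v) m (s : 'I_m.+1 -> 'I_n.+1) :
  sMap (Nerve (SubPoset m)) (Ex (Nerve Xposet)).
Proof.
refine (@Build_sMap (Nerve (SubPoset m)) (Ex (Nerve Xposet)) (fun k t => (wphi H s t : Ex (Nerve Xposet) k)) _).
move=> k' k d t; apply: sMap_ext => j p; apply: sig_fun_eq => i /=.
by apply: sig_eq; rewrite /= img_smap.
Defined.

Lemma simg_comp m m' m'' (f : 'I_m'.+1 -> 'I_m.+1) (g : 'I_m''.+1 -> 'I_m'.+1) (s : SS m'') :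
  simg (f \o g) s = simg f (simg g s).
Proof.
rewrite /simg -imset_comp; apply: eq_imset => T /=; exact: imset_comp.
Qed.

Definition wmap n u v (H : @commutes n u v) : sMap (Delta n) (Ex (Ex (Nerve Xposet))).
Proof.
refine (@Build_sMap (Delta n) (Ex (Ex (Nerve Xposet))) (fun m x => (wTh H (sval x) : Ex (Ex (Nerve Xposet)) m)) _).
move=> m m' d x; apply: sMap_ext => k t; apply: sMap_ext => j p; apply: sig_fun_eq => i /=.
apply: sig_eq; rewrite /= img_push -simg_comp //.
Defined.

Lemma lifting : pos_acyclic_fibration fX.
Proof.
move=> n u v H.
exists (wmap H); split.
- move=> m x; apply: Ex2_ext => k t j p i.
  case: x => xd [j0 Hj0].
  set s : 'I_m.+1 -> 'I_n.+1 := sval xd.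
  set R : {set 'I_n.+1} := s @: setT.
  have HR : R != set0 by apply/set0Pn; exists (s ord0); apply: imset_f.
  have Hj0R : j0 \notin R by apply/imsetP => -[y _ E]; move/eqP: (Hj0 y); apply; rewrite E.
  have Hb : forall i, sval (retrD R) i != j0.
    by move=> i0; apply: contraNneq Hj0R => <-; exact: retr_mem.
  set b : Boundary n n := bdel (ex_intro _ j0 Hb).
  rewrite (Bnat u (b := b)); last by move=> i0; rewrite /= retr_id //; apply: imset_f.
  rewrite [RHS]evsmap [RHS]evD img_push.
  set S := sval (sval p i).
  have Hv : Cvalidb (simg s (img t S)).
    by apply: simg_Cvalid; apply: img_Cvalid; exact: (svalP (sval p i)).
  have HsR : bigU (simg s (img t S)) \subset R.
    apply/bigcupsP => T /imsetP [T' _ ->]; exact: imsetS (subsetT _).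
  have HC' : C'validb (simg s (img t S)).
    apply: C'_of => //; apply/negP => HT.
    have := subset_trans (sub_bigU HT) HsR; rewrite subTset => /eqP ER.
    by move: Hj0R; rewrite ER inE.
  apply: sig_eq; rewrite /= WrawC' //.
  exact: (Ucan u (b := b) (R := R)).
- move=> m x; apply: Ex2_ext => k t j p i.
  rewrite ev_f (Dnat v x) [RHS]evsmap [RHS]evD img_push.
  rewrite /= xf_W //.
  by apply: simg_Cvalid; apply: img_Cvalid; exact: (svalP (sval p i)).
Qed.


Theorem proposition6p2 : ~ pos_cofibrant Aposet.
Proof.
move=> Hc.
pose idA : Mono Aposet Aposet := @Build_Mono Aposet Aposet (fun x => x) (fun x y h => h).
have [l Hl] := Hc Xposet Aposet fX lifting idA.
exact: (@nosec _ (fun a => sval (l a)) (leqnn _) (fun a => svalP (l a))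
  (fun a b h => @mfun_mono _ _ l a b h) Hl).
Qed.
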